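(* Let $K\ge 1$ and $N>K$ be integers and $\mu>0$. Consider $K$ files $f_1,\dots,f_K$ stored on $N$ nodes using a systematic $(N,K)$ MDS code, each node having service rate $\mu$. Then every vector $(\lambda_1,\dots,\lambda_K)$ in the service capacity region of this system satisfies $$\sum_{i=1}^{K}\Big(\min(\lambda_i,\mu)+K(\lambda_i-\mu)^{+}\Big)\le N\mu,$$ where $(x)^+=\max(0,x)$.
   Context: Storage model: there are $K$ files $f_1,\dots,f_K$ of equal size stored on $N$ nodes labeled $1,\dots,N$, each node having service rate $\mu$. In the systematic $(N,K)$ MDS code, node $i$ stores $f_i$ for $1\le i\le K$, and nodes $K+1,\dots,N$ store parity symbols, such that file $f_i$ can be recovered either from node $i$ alone or from any $K$ of the other $N-1$ nodes. Accordingly, the recovering sets of $f_i$ are $\{i\}$ together with every $K$-element subset of $\{1,\dots,N\}\setminus\{i\}$; denote them $R^{(i)}_1,\dots,R^{(i)}_{t_i}$. Requests for $f_i$ arrive at rate $\lambda_i\ge 0$. The service capacity region is the set of vectors $(\lambda_1,\dots,\lambda_K)$ for which there exist numbers $\lambda^{(i)}_j\ge 0$ ($1\le i\le K$, $1\le j\le t_i$; the rate of requests for $f_i$ assigned to recovering set $R^{(i)}_j$) with $\sum_{j=1}^{t_i}\lambda^{(i)}_j=\lambda_i$ for every $i$, and $\sum_{i=1}^K\sum_{j:\,\ell\in R^{(i)}_j}\lambda^{(i)}_j\le\mu$ for every node $\ell\in\{1,\dots,N\}$. *)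

(* Defs.v *)
From HB Require Import structures.
From mathcomp Require Import all_boot all_order all_algebra.
Set Implicit Arguments. Unset Strict Implicit. Unset Printing Implicit Defensive.
Import Order.TTheory GRing.Theory Num.Theory.
Local Open Scope ring_scope.

(* Nodes are 'I_N (node j+1 of the paper = ordinal j), files are 'I_K.
   In the systematic code, file i (ordinal i) is stored on node
   sys_node hKN i = ordinal i (seen in 'I_N). *)
Definition sys_node (K N : nat) (hKN : (K <= N)%N) (i : 'I_K) : 'I_N :=
  widen_ord hKN i.

Definition recovering_set (K N : nat) (hKN : (K <= N)%N) (i : 'I_K)
    (S : {set 'I_N}) : bool :=
  (S == [set sys_node hKN i]) || ((#|S| == K) && (sys_node hKN i \notin S)).

Definition in_capacity_region (R : realFieldType) (K N : nat)
    (hKN : (K <= N)%N) (mu : R) (lambda : 'I_K -> R) : Prop :=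
  exists lam : 'I_K -> {set 'I_N} -> R,
    [/\ (forall i S, 0 <= lam i S),
        (forall i S, ~~ recovering_set hKN i S -> lam i S = 0),
        (forall i, \sum_(S : {set 'I_N} | recovering_set hKN i S) lam i S
                   = lambda i)
      & (forall l : 'I_N,
           \sum_(i < K) \sum_(S : {set 'I_N} | recovering_set hKN i S && (l \in S))
              lam i S <= mu)].

Definition posp (R : realDomainType) (x : R) : R := Num.max 0 x.

(* Main.v *)
Require Import Defs.
From HB Require Import structures.
From mathcomp Require Import all_boot all_order all_algebra.
From mathcomp Require Import lra.
Import Order.TTheory GRing.Theory Num.Theory.
Local Open Scope ring_scope.

Lemma swap_count (R : realFieldType) (N : nat) (P : pred {set 'I_N}) (f : {set 'I_N} -> R) :
  \sum_(l : 'I_N) \sum_(S : {set 'I_N} | P S && (l \in S)) f S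
  = \sum_(S : {set 'I_N} | P S) #|S|%:R * f S.
Proof.
under eq_bigr => l _ do rewrite big_mkcondr /=.
rewrite exchange_big /=; apply: eq_bigr => S _.
rewrite -big_mkcond /= sumr_const; by rewrite mulr_natl.
Qed.

Theorem theorem1 (R : realFieldType) (K N : nat) (hK : (1 <= K)%N)
    (hKN : (K < N)%N) (mu : R) (hmu : 0 < mu) (lambda : 'I_K -> R) :
  (forall i, 0 <= lambda i) ->
  in_capacity_region (ltnW hKN) mu lambda ->
  \sum_(i < K) (Num.min (lambda i) mu + K%:R * posp (lambda i - mu))
    <= N%:R * mu.
Proof.
move=> hl [lam [h0 h1 h2 h3]].
set P := recovering_set (ltnW hKN).
have tot : \sum_(l : 'I_N) \sum_(i < K)
   \sum_(S : {set 'I_N} | P i S && (l \in S)) lam i S <= N%:R * mu.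
  apply: le_trans (ler_sum _ (fun l _ => h3 l)) _.
  by rewrite sumr_const card_ord mulr_natl.
rewrite exchange_big /= in tot.
apply: le_trans tot; apply: ler_sum => i _.
rewrite swap_count.
set s := [set sys_node (ltnW hKN) i].
have Ps : P i s by rewrite /P /recovering_set eqxx.
have Hb := h2 i; rewrite (bigD1 s) //= in Hb.
rewrite (bigD1 s) //= cards1 mul1r.
have -> : \sum_(S | P i S && (S != s)) #|S|%:R * lam i S
        = K%:R * \sum_(S | P i S && (S != s)) lam i S.
  rewrite mulr_sumr; apply: eq_bigr => S /andP[].
  rewrite /P /recovering_set => /orP[/eqP -> |/andP[/eqP -> _]] //.
  by rewrite eqxx.
set a := lam i s; set b := \sum_(S | P i S && (S != s)) lam i S.
have b0 : 0 <= b by apply: sumr_ge0 => S _; apply: h0.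
have amu : a <= mu.
  apply: le_trans (h3 (sys_node (ltnW hKN) i)).
  rewrite (bigD1 i) //= (bigD1 s) /=; last by apply/andP; split; [exact: Ps | exact: set11].
  rewrite -addrA lerDl addr_ge0 //; apply: sumr_ge0 => *; first by apply: h0.
  by apply: sumr_ge0 => *; apply: h0.
have a0 : 0 <= a by apply: h0.
rewrite -Hb -/a -/b /posp.
have K1 : 1 <= (K%:R : R) by rewrite ler1n.
case: (leP (a + b) mu) => hab.
  rewrite max_l ?subr_le0 // mulr0 addr0 lerD2l -{1}(mul1r b).
  exact: ler_wpM2r.
rewrite max_r; last by rewrite subr_ge0 ltW.
have hp : 0 <= (K%:R - 1) * (mu - a) by rewrite mulr_ge0 // subr_ge0.
move: hp; set k := (K%:R : R) => hp; nra.
Show.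
Qed.
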